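(* Let $p\in(0,1)$. There exists a constant $C_1<\infty$ depending only on $p$ such that the following holds. For every $n\in\mathbb{N}$, let $\xi_1,\dots,\xi_n$ be independent Bernoulli random variables with parameter $p$, and identify a realization with the set $\{i\in[1,n]_{\mathbb{Z}}:\xi_i=1\}$. Then for every Sperner family $\mathcal{A}_n$ of subsets of $[1,n]_{\mathbb{Z}}$, regarded as the event $\{\{i:\xi_i=1\}\in\mathcal{A}_n\}$, we have $\mathbb{P}[\mathcal{A}_n]\le C_1/\sqrt{n}$.
   Context: $[1,n]_{\mathbb{Z}}=\{1,\dots,n\}$. A collection $\mathcal{A}_n$ of subsets of $[1,n]_{\mathbb{Z}}$ is called a Sperner family if for each $A\in\mathcal{A}_n$ at least one of the following holds: (1) there exists $B_A\subset[1,n]_{\mathbb{Z}}\setminus A$ with $|B_A|\ge n/2$ such that every $A'\supset A$ with $A'\cap B_A\neq\emptyset$ satisfies $A'\notin\mathcal{A}_n$; (2) there exists $B'_A\subset A$ with $|B'_A|\ge n/2$ such that every $A'\subset A$ with $B'_A\setminus A'\ne\emptyset$ satisfies $A'\notin\mathcal{A}_n$. *)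

(* Defs.v *)
From HB Require Import structures.
From mathcomp Require Import all_boot all_order all_algebra.
From mathcomp Require Import reals.
Set Implicit Arguments. Unset Strict Implicit. Unset Printing Implicit Defensive.
Import Order.TTheory GRing.Theory Num.Theory.

(* The ground set [1,n] is modelled by 'I_n; subsets are {set 'I_n};
   a family of subsets is a {set {set 'I_n}}. *)

(* Generalized Sperner family, exactly as in the paper's definition:
   for each A in F, either
   (1) there is B disjoint from A with |B| >= n/2 such that no A' ⊇ A
       meeting B belongs to F, or
   (2) there is B' ⊆ A with |B'| >= n/2 such that no A' ⊆ A not
       containing B' belongs to F.
   |B| >= n/2 is written n <= 2 * #|B| (exact, in nat). *)
Definition sperner (n : nat) (F : {set {set 'I_n}}) : Prop :=
  forall A : {set 'I_n}, A \in F ->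
    (exists B : {set 'I_n},
        [/\ B \subset ~: A, (n <= 2 * #|B|)%N &
            forall A' : {set 'I_n}, A \subset A' -> ~~ [disjoint A' & B] ->
              A' \notin F])
    \/
    (exists B' : {set 'I_n},
        [/\ B' \subset A, (n <= 2 * #|B'|)%N &
            forall A' : {set 'I_n}, A' \subset A -> ~~ (B' \subset A') ->
              A' \notin F]).

(* Probability, under independent Bernoulli(p) coordinates xi_1..xi_n,
   that the random set {i | xi_i = 1} lies in F (product measure). *)
Definition bernoulli_prob (R : realType) (p : R) (n : nat)
    (F : {set {set 'I_n}}) : R :=
  (\sum_(S in F) p ^+ #|S| * (1 - p) ^+ (n - #|S|))%R.

(* Main.v *)
Require Import Defs.
From HB Require Import structures.
From mathcomp Require Import all_boot all_order all_algebra.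
From mathcomp Require Import reals.
From mathcomp Require Import ring lra zify.
Import Order.TTheory GRing.Theory Num.Theory.
Local Open Scope ring_scope.


Section Bin.
Variable R : realType.
Implicit Types p : R.

Definition bin p n k : R := 'C(n,k)%:R * p ^+ k * (1 - p) ^+ (n - k).

Lemma bin_ge0 p n k : 0 <= p -> p <= 1 -> 0 <= bin p n k.
Proof.
move=> h0 h1; rewrite /bin; apply: mulr_ge0; first apply: mulr_ge0 => //.
- exact: exprn_ge0.
- by apply: exprn_ge0; rewrite subr_ge0.
Qed.

Lemma bin_rec p n k : bin p n k.+1 * k.+1%:R * (1 - p) = bin p n k * (n - k)%:R * p.
Proof.
rewrite /bin.
case: (ltnP k n) => hk.
- have e1 : (n - k = (n - k.+1).+1)%N by rewrite subnSK.
  have e2 : ('C(n, k.+1) * k.+1 = 'C(n, k) * (n - k))%N.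
    by rewrite mulnC -mul_bin_diag mul_bin_down mulnC.
  rewrite e1 !exprS.
  have e3 : ('C(n, k.+1)%:R * k.+1%:R = 'C(n, k)%:R * (n - k.+1).+1%:R :> R).
    by rewrite -!natrM e2 e1.
  transitivity ('C(n, k.+1)%:R * k.+1%:R * (p * p ^+ k) * ((1 - p) * (1 - p) ^+ (n - k.+1)) : R); first ring.
  rewrite e3; ring.
- have -> : 'C(n, k.+1) = 0%N by rewrite bin_small // ltnS.
  have -> : (n - k = 0)%N by apply/eqP; rewrite subn_eq0.
  by rewrite !mul0r mulr0 mul0r.
Qed.

Lemma bin_sum p n : \sum_(k < n.+1) bin p n k = 1.
Proof.
have := exprDn (1 - p) p n.
rewrite subrK expr1n => ->.
apply: eq_bigr => i _; rewrite /bin -mulr_natl; ring.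
Qed.

Lemma bin_sym p n k : (k <= n)%N -> bin p n k = bin (1 - p) n (n - k).
Proof.
move=> hk; rewrite /bin bin_sub // subKn //.
have -> : 1 - (1 - p) = p by ring.
ring.
Qed.

Lemma bin_small' p n k : (n < k)%N -> bin p n k = 0.
Proof. by move=> h; rewrite /bin bin_small // !mul0r. Qed.

End Bin.
Arguments bin {R}.


Section Bin2.
Variable R : realType.
Implicit Types p : R.

Lemma bin_grow p n m : 0 < p -> p < 1 -> m%:R <= n%:R * p ->
  forall j : nat, (j ^ 2)%:R <= n%:R * (p * (1 - p)) ->
  bin p n m * (n%:R * (p * (1 - p)) - (j ^ 2)%:R) <= bin p n (m + j) * (n%:R * (p * (1 - p))).
Proof.
move=> p0 p1 hm; set t := n%:R * (p * (1 - p)).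
have t0 : 0 <= t by rewrite /t; apply: mulr_ge0 => //; apply: mulr_ge0; lra.
elim=> [|j IH] hj.
  by rewrite addn0 subr0.
have hj' : (j ^ 2)%:R <= t.
  by apply: le_trans hj; rewrite ler_nat leq_exp2r // leqnSn.
have {}IH := IH hj'.
have a0 := @bin_ge0 R p n (m + j) (ltW p0) (ltW p1).
have b0 := @bin_ge0 R p n m (ltW p0) (ltW p1).
have c0 := @bin_ge0 R p n (m + j).+1 (ltW p0) (ltW p1).
have rec := @bin_rec R p n (m + j).
rewrite addnS.
set a := bin p n (m + j) in IH a0 rec *.
set b := bin p n m in IH b0 *.
set c := bin p n (m + j).+1 in c0 rec *.
have hN : n%:R - m%:R - j%:R <= (n - (m + j))%:R :> R.
  case: (leqP (m + j) n) => h.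
    by rewrite natrB // natrD; lra.
  have : (n < m + j)%N := h.
  rewrite -(ltr_nat R) natrD => h'.
  have -> : (n - (m + j) = 0)%N by apply/eqP; rewrite subn_eq0 ltnW.
  lra.
set N' := (n - (m + j))%:R in hN rec *.
have ej : (j.+1 ^ 2)%:R = (j%:R + 1) ^+ 2 :> R by rewrite natrX -addn1 natrD.
have ej2 : (j ^ 2)%:R = (j%:R) ^+ 2 :> R by rewrite natrX.
rewrite ej in hj *; rewrite ej2 in IH hj'.
have jr : 0 <= j%:R :> R by [].
have mr : 0 <= m%:R :> R by [].
clear ej ej2.
set jj := j%:R in jr IH hj' hN hj *.
set x := jj + 1 in hj *.
set mm := m%:R in hm mr hN *.
have x1 : 1 <= x by rewrite /x; lra.
have xt : x <= t.
  have : 0 <= (x - 1) * x by apply: mulr_ge0; lra.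
  rewrite expr2 in hj; nra.
have key : (t - x) * (mm + x) * (1 - p) <= t * N' * p.
  have h1 : 0 <= t * p * (n%:R * p - mm) by apply: mulr_ge0; [apply: mulr_ge0|]; lra.
  have h2 : 0 <= (t - x) * (1 - p) * (n%:R * p - mm) by apply: mulr_ge0; [apply: mulr_ge0|]; lra.
  have h3 : t * p * (n%:R - mm - jj) <= t * p * N'.
    by apply: ler_wpM2l => //; apply: mulr_ge0 => //; lra.
  have et : t = n%:R * (p * (1 - p)) by [].
  rewrite /x in h2 *; nra.
have k2 : a * ((t - x) * (mm + x) * (1 - p)) <= a * (t * N' * p) by apply: ler_wpM2l.
have mx : 0 < (mm + x) * (1 - p) by apply: mulr_gt0; rewrite /x; lra.
have k3 : a * (t - x) <= c * t.
  have : a * (t - x) * ((mm + x) * (1 - p)) <= c * t * ((mm + x) * (1 - p)).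
    have e4 : c * t * ((mm + x) * (1 - p)) = t * (a * N' * p).
      have em : (m + j).+1%:R = mm + x :> R.
        by rewrite /mm /x /jj -addn1 !natrD addrA.
      rewrite -rec em; ring.
    rewrite e4; nra.
  by rewrite ler_pM2r.
have k4 : b * (t - x ^+ 2) * t <= a * (t - x) * t.
  have : b * (t - jj ^+ 2) * (t - x) <= a * t * (t - x).
    by apply: ler_wpM2r => //; lra.
  have : 0 <= b * (t * (x ^+ 2 - x - jj ^+ 2) + jj ^+ 2 * x).
    apply: mulr_ge0 => //; apply: addr_ge0; last first.
      by apply: mulr_ge0; [exact: exprn_ge0 | rewrite /x; lra].
    apply: mulr_ge0 => //; rewrite /x.
    have -> : (jj + 1) ^+ 2 - (jj + 1) - jj ^+ 2 = jj by ring.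
    done.
  nra.
case: (t =P 0) => [t00|tn0].
  by rewrite t00 /x in hj *; nra.
have tp : 0 < t by rewrite lt_def; apply/andP; split => //; apply/eqP.
have : b * (t - x ^+ 2) <= a * (t - x) by rewrite -(ler_pM2r tp).
lra.
Qed.
End Bin2.


Section Bin3.
Variable R : realType.
Implicit Types p : R.

Lemma sum_bin_le1 p n L : 0 < p -> p < 1 -> \sum_(0 <= i < L) bin p n i <= 1.
Proof.
move=> p0 p1.
have f0 i : 0 <= bin p n i by apply: bin_ge0; lra.
have h1 : \sum_(0 <= i < L) bin p n i <= \sum_(0 <= i < L + n.+1) bin p n i.
  rewrite [X in _ <= X](@big_cat_nat _ _ _ L) ?leq_addr //= lerDl.
  by apply: sumr_ge0 => i _.
apply: (le_trans h1).
rewrite (@big_cat_nat _ _ _ n.+1) ?leq_addl //= big_mkord bin_sum.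
rewrite big_nat_cond big1 ?addr0 // => i /andP [/andP [hi _] _].
by apply: bin_small'.
Qed.

Lemma sum_window p n m K : 0 < p -> p < 1 -> \sum_(j < K) bin p n (m + j) <= 1.
Proof.
move=> p0 p1.
have f0 i : 0 <= bin p n i by apply: bin_ge0; lra.
have e : \sum_(j < K) bin p n (m + j) = \sum_(0 + m <= i < K + m) bin p n i.
  by rewrite big_addn addnK big_mkord; apply: eq_bigr => i _; rewrite addnC.
rewrite e add0n; apply: le_trans (sum_bin_le1 p n (K + m) p0 p1).
rewrite [X in _ <= X](@big_cat_nat _ _ _ m 0) ?leq_addl //= lerDr.
by apply: sumr_ge0 => i _.
Qed.


Lemma bin_bound_dir p n m : 0 < p -> p < 1 -> (0 < n)%N -> m%:R <= n%:R * p ->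
  bin p n m ^+ 2 <= 8 / (n%:R * (p * (1 - p))).
Proof.
move=> p0 p1 n0 hm.
have s0 : 0 < p * (1 - p) by apply: mulr_gt0; lra.
have s1 : p * (1 - p) <= 1 by nra.
have nr : 0 < n%:R :> R by rewrite ltr0n.
set t := n%:R * (p * (1 - p)).
have tp : 0 < t by apply: mulr_gt0.
have tn : t <= n%:R by rewrite /t; nra.
have ex : exists K, t < 2 * (K ^ 2)%:R.
  exists n.+1; apply: le_lt_trans tn _.
  have h : (n < 2 * n.+1 ^ 2)%N by rewrite expnS expn1; nia.
  by rewrite -(ltr_nat R) natrM in h.
case: (ex_minnP ex) => K0 hK0 hmin.
have K0p : (0 < K0)%N.
  case: K0 hK0 {hmin} => [|//]; rewrite mulr0; lra.
set J := K0.-1.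
have hJ : 2 * (J ^ 2)%:R <= t.
  rewrite leNgt; apply/negP => h.
  have := hmin J h; rewrite /J; case: (K0) K0p => // k _; rewrite ltnn.
  by [].
have b0 := @bin_ge0 R p n m (ltW p0) (ltW p1).
set b := bin p n m in b0 *.
have hj (j : 'I_K0) : b / 2 <= bin p n (m + j).
  have jJ : (j <= J)%N by rewrite /J -ltnS prednK // ltn_ord.
  have jj : (j ^ 2)%:R <= (J ^ 2)%:R :> R by rewrite ler_nat leq_exp2r.
  have J0 : 0 <= (J ^ 2)%:R :> R by [].
  have hjt : (j ^ 2)%:R <= t by lra.
  have h := @bin_grow R p n m p0 p1 hm j hjt.
  have c0 := @bin_ge0 R p n (m + j) (ltW p0) (ltW p1).
  have : b * t / 2 <= bin p n (m + j) * t.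
    apply: le_trans h; rewrite -mulrA; apply: ler_wpM2l => //.
rewrite -/t; lra.
  move=> h2.
  have : b / 2 * t <= bin p n (m + j) * t by rewrite mulrAC.
  by rewrite ler_pM2r.
have hs : (b / 2) * K0%:R <= 1.
  have -> : (b / 2) * K0%:R = \sum_(j < K0) (b / 2) by rewrite sumr_const card_ord mulr_natr.
  apply: le_trans (sum_window p n m K0 p0 p1); apply: ler_sum => j _; exact: hj.
have bk : b * K0%:R <= 2 by lra.
have k0r : 0 <= K0%:R :> R by [].
have bk0 : 0 <= b * K0%:R by apply: mulr_ge0.
have bk2 : (b * K0%:R) ^+ 2 <= 4 by nra.
rewrite ler_pdivlMr //.
rewrite natrX in hK0.
have b2 : 0 <= b ^+ 2 by apply: exprn_ge0.
have : b ^+ 2 * t <= b ^+ 2 * (2 * K0%:R ^+ 2) by apply: ler_wpM2l => //; lra.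
rewrite exprMn in bk2; nra.
Qed.

Lemma bin_max p n k : 0 < p -> p < 1 -> (0 < n)%N ->
  bin p n k ^+ 2 <= 8 / (n%:R * (p * (1 - p))).
Proof.
move=> p0 p1 n0.
have s0 : 0 < p * (1 - p) by apply: mulr_gt0; lra.
have nr : 0 < n%:R :> R by rewrite ltr0n.
have pos : 0 <= 8 / (n%:R * (p * (1 - p))).
  by apply: divr_ge0 => //; apply: mulr_ge0; lra.
case: (ltnP n k) => hk.
  by rewrite bin_small' // expr0n.
case: (lerP (k%:R) (n%:R * p)) => hkp.
  exact: bin_bound_dir.
rewrite bin_sym //.
have -> : p * (1 - p) = (1 - p) * (1 - (1 - p)) by ring.
apply: bin_bound_dir; try lra.
  by [].
rewrite natrB //; nra.
Qed.

End Bin3.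


Section Lub.
Variable R : realType.
Variable n : nat.
Variable G : {set {set 'I_n}}.

Definition w (A A' : {set 'I_n}) : R := ('C(n - #|A|, #|A'| - #|A|)%:R)^-1.

Definition H (A : {set 'I_n}) : R :=
  \sum_(A' : {set 'I_n}) (if (A' \in G) && (A \subset A') then w A A' else 0).

Lemma w_ge0 A A' : 0 <= w A A'.
Proof. by rewrite /w invr_ge0. Qed.

Lemma H_ge0 A : 0 <= H A.
Proof. by apply: sumr_ge0 => A' _; case: ifP => _ //; apply: w_ge0. Qed.

Lemma count_b (A A' : {set 'I_n}) (c : R) :
  \sum_(b in ~: A) (if (A' \in G) && (b |: A \subset A') then c else 0) =
  if (A' \in G) && (A \subset A') then (#|A'| - #|A|)%:R * c else 0.
Proof.
case: (boolP (A' \in G)) => hG /=; last by rewrite big1.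
rewrite -big_mkcondr /=.
case: (boolP (A \subset A')) => hA.
  rewrite (eq_bigl (fun b => b \in A' :\: A)); last first.
    move=> b /=; rewrite in_setC in_setD subUset sub1set hA andbT andbC.
    by [].
  by rewrite sumr_const cardsD (setIidPr hA) mulr_natl.
rewrite big_pred0 // => b; apply/negbTE; apply/negP => /andP [_].
by rewrite subUset (negbTE hA) andbF.
Qed.

Lemma w_point (A A' : {set 'I_n}) : (#|A| < n)%N -> A \subset A' ->
  (n - #|A|)%:R * w A A' =
  (n - #|A|)%:R * (A' == A)%:R + (#|A'| - #|A|)%:R * ('C(n - #|A|.+1, #|A'| - #|A|.+1)%:R)^-1.
Proof.
move=> hn hA; rewrite /w.
case: eqVneq => [->|ne].
  by rewrite subnn mul0r addr0 bin0 invr1 mulr1.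
have lt : (#|A| < #|A'|)%N.
  by apply: proper_card; rewrite properEneq eq_sym ne hA.
have le : (#|A'| <= n)%N by rewrite -[X in (_ <= X)%N](card_ord n) max_card.
set N := (n - #|A|)%N.
set d := (#|A'| - #|A|.+1)%N.
have e1 : (#|A'| - #|A| = d.+1)%N by rewrite /d; lia.
have e2 : (n - #|A|.+1 = N.-1)%N by rewrite /N; lia.
have hd : (d.+1 <= N)%N by rewrite /d /N; lia.
rewrite e1 e2 mulr0 add0r.
have h := mul_bin_diag N d.
have c1 : (0 < 'C(N, d.+1))%N by rewrite bin_gt0.
have c2 : (0 < 'C(N.-1, d))%N by rewrite bin_gt0; lia.
have e : (d.+1%:R : R) = N%:R * 'C(N.-1, d)%:R / 'C(N, d.+1)%:R.
  rewrite -natrM h natrM mulfK //; rewrite pnatr_eq0; lia.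
rewrite e; field.
by apply/andP; split; rewrite pnatr_eq0; lia.
Qed.

Lemma H_rec (A : {set 'I_n}) : (#|A| < n)%N ->
  (n - #|A|)%:R * H A = (n - #|A|)%:R * (A \in G)%:R + \sum_(b in ~: A) H (b |: A).
Proof.
move=> hn.
have e1 : \sum_(b in ~: A) H (b |: A) = \sum_(b in ~: A) \sum_(A' : {set 'I_n})
   (if (A' \in G) && (b |: A \subset A') then ('C(n - #|A|.+1, #|A'| - #|A|.+1)%:R)^-1 else 0).
  apply: eq_bigr => b hb; rewrite /H; apply: eq_bigr => A' _.
  by rewrite /w cardsU1 -in_setC hb add1n.
rewrite e1 exchange_big /=.
under eq_bigr do rewrite count_b.
rewrite /H mulr_sumr.
rewrite (eq_bigr (fun A' => (if (A' \in G) && (A \subset A') then (n - #|A|)%:R * (A' == A)%:R else 0) +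
   (if (A' \in G) && (A \subset A') then (#|A'| - #|A|)%:R * ('C(n - #|A|.+1, #|A'| - #|A|.+1)%:R)^-1 else 0))); last first.
  move=> A' _; case: ifP => [/andP [_ hA]|_]; last by rewrite mulr0 addr0.
  exact: w_point.
rewrite big_split /=; congr (_ + _).
rewrite (bigD1 A) //= big1 ?addr0; last first.
  by move=> A' ne; case: ifP => // _; rewrite (negbTE ne) mulr0.
by rewrite subxx andbT eqxx; case: (A \in G); rewrite ?mulr0.
Qed.

Definition type1 := forall A : {set 'I_n}, A \in G -> exists B : {set 'I_n},
  [/\ B \subset ~: A, (n <= 2 * #|B|)%N &
      forall A' : {set 'I_n}, A \subset A' -> ~~ [disjoint A' & B] -> A' \notin G].

Lemma cardC' (A : {set 'I_n}) : #|~: A| = (n - #|A|)%N.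
Proof. have := cardsC A; rewrite card_ord; lia. Qed.

Lemma card_le_n (A : {set 'I_n}) : (#|A| <= n)%N.
Proof. by rewrite -[X in (_ <= X)%N](card_ord n) max_card. Qed.

Lemma H_le2 : type1 -> forall A, H A <= 2.
Proof.
move=> hG.
suff : forall d (A : {set 'I_n}), (n - #|A|)%N = d -> H A <= 2 by move=> h A; exact: h _ A erefl.
elim=> [|d IH] A hd.
  have hA : #|A| = n by have := card_le_n A; lia.
  rewrite /H (bigD1 A) //= big1 ?addr0.
    rewrite subxx andbT /w subnn hA subnn bin0 invr1.
    by case: (A \in G) => //; lra.
  move=> A' ne; case: ifP => // /andP [_ hs].
  exfalso; move/negP: ne; apply; rewrite eq_sym eqEcard hs hA card_le_n.
  by [].
have hn : (#|A| < n)%N by lia.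
have IH' : forall b, b \in ~: A -> H (b |: A) <= 2.
  move=> b hb; apply: IH; rewrite cardsU1 -in_setC hb add1n; lia.
have rec := H_rec A hn; rewrite hd in rec.
have dp : 0 < d.+1%:R :> R by rewrite ltr0n.
suff : d.+1%:R * H A <= d.+1%:R * 2 by rewrite ler_pM2l.
have cA : #|~: A| = d.+1 by rewrite cardC'.
case: (boolP (A \in G)) => hA.
  have [B [hB1 hB2 hB3]] := hG A hA.
  have hBc : (#|B| <= d.+1)%N by rewrite -cA subset_leq_card.
  have hsum : \sum_(b in ~: A) H (b |: A) <= 2 * (d.+1 - #|B|)%:R.
    rewrite (big_setID B) /= big1 ?add0r.
      apply: (@le_trans _ _ (\sum_(b in ~: A :\: B) (2 : R))).
        apply: ler_sum => b; rewrite in_setD => /andP [_ hb]; exact: IH'.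
      by rewrite sumr_const cardsD (setIidPr hB1) cA mulr_natr.
    move=> b; rewrite in_setI => /andP [hb hbB].
    rewrite /H big1 // => A' _; case: ifP => // /andP [hA' hsub]; exfalso.
    rewrite subUset sub1set in hsub; case/andP: hsub => hbA' hsub.
    have hnd : ~~ [disjoint A' & B].
      by apply/negP => hdis; rewrite (disjointFr hdis hbA') in hbB.
    by rewrite (negbTE (hB3 A' hsub hnd)) in hA'.
  rewrite rec hA mulr1.
  rewrite natrB // in hsum.
  have : (n <= 2 * #|B|)%N := hB2.
  rewrite -(ler_nat R) natrM => h2.
  have : (d.+1 <= n)%N by lia.
  rewrite -(ler_nat R) => h3.
  lra.
rewrite rec (negbTE hA) mulr0 add0r.
apply: (@le_trans _ _ (\sum_(b in ~: A) (2 : R))).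
  by apply: ler_sum => b hb; exact: IH'.
by rewrite sumr_const cA mulr_natl.
Qed.

End Lub.

Lemma H0 (R : realType) n (G : {set {set 'I_n}}) :
  @H R n G set0 = \sum_(A' in G) ('C(n, #|A'|)%:R)^-1.
Proof.
rewrite /H [RHS]big_mkcond; apply: eq_bigr => A' _.
by rewrite sub0set andbT /w cards0 !subn0.
Qed.

Theorem proposition2p2 (R : realType) (p : R) :
  0 < p -> p < 1 ->
  exists C1 : R,
    forall (n : nat), (0 < n)%N ->
    forall F : {set {set 'I_n}}, sperner F ->
      bernoulli_prob p F <= C1 / Num.sqrt (n%:R).
Proof.
move=> p0 p1.
have s0 : 0 < p * (1 - p) by apply: mulr_gt0; lra.
set C0 := Num.sqrt (8 / (p * (1 - p))).
have C0p : 0 <= C0 by apply: sqrtr_ge0.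
exists (4 * C0) => n n0 F hF.
have nr : 0 < n%:R :> R by rewrite ltr0n.
have sn : 0 < Num.sqrt (n%:R : R) by rewrite sqrtr_gt0.
set M := C0 / Num.sqrt (n%:R : R).
have M0 : 0 <= M by apply: divr_ge0 => //; apply: ltW.
have hb : forall k, bin p n k <= M.
  move=> k; have h := @bin_max R p n k p0 p1 n0.
  have b0 : 0 <= bin p n k by apply: bin_ge0; lra.
  have eM : M ^+ 2 = 8 / (n%:R * (p * (1 - p))).
    rewrite /M expr_div_n (sqr_sqrtr (ltW nr)) /C0 sqr_sqrtr; last first.
      by apply: divr_ge0 => //; apply: ltW.
    field.
    by rewrite !lt0r_neq0 //; lra.
  rewrite -eM in h; nra.
have hterm : forall S : {set 'I_n}, p ^+ #|S| * (1 - p) ^+ (n - #|S|) <= M * ('C(n, #|S|)%:R)^-1.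
  move=> S.
  have c0 : (0 < 'C(n, #|S|))%N by rewrite bin_gt0 card_le_n.
  have cr : 0 < 'C(n, #|S|)%:R :> R by rewrite ltr0n.
  have e : p ^+ #|S| * (1 - p) ^+ (n - #|S|) = bin p n #|S| * ('C(n, #|S|)%:R)^-1.
    by rewrite /bin; field; apply: lt0r_neq0.
  rewrite e; apply: ler_wpM2r; [by rewrite invr_ge0; apply: ltW | exact: hb].
set t1b := fun A : {set 'I_n} => [exists B : {set 'I_n}, [&& B \subset ~: A, (n <= 2 * #|B|)%N &
   [forall A' : {set 'I_n}, (A \subset A') && ~~ [disjoint A' & B] ==> (A' \notin F)]]].
set T1 := [set A | t1b A].
set G1 := F :&: T1.
set G2 := F :\: T1.
have hG1 : @type1 n G1.
  move=> A; rewrite in_setI inE => /andP [hAF /existsP [B /and3P [h1 h2 /forallP h3]]].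
  exists B; split => // A' hs hd; rewrite in_setI negb_and.
  by have := h3 A'; rewrite hs hd /= => /negbTE ->.
have hG2 : @type1 n ((@setC _) @: G2).
  move=> X /imsetP [A hA ->]; move: hA; rewrite in_setD inE => /andP [hnt hAF].
  case: (hF A hAF) => [[B [h1 h2 h3]]|[B [h1 h2 h3]]].
    exfalso; move/negP: hnt; apply; apply/existsP; exists B; rewrite h1 h2 /=.
    apply/forallP => A'; apply/implyP => /andP [hs hd]; exact: h3.
  exists B; split => //; first by rewrite setCK.
  move=> X' hs hd; apply/negP => /imsetP [A'' hA'' eX].
  move: hA''; rewrite in_setD => /andP [_ hA''F].
  rewrite eX setCS in hs.
  have hB : ~~ (B \subset A'').
    apply/negP => hBA; move/negP: hd; apply.
    by rewrite eX disjoints_subset setCS.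
  by rewrite (negbTE (h3 A'' hs hB)) in hA''F.
have L1 : \sum_(A in G1) ('C(n, #|A|)%:R)^-1 <= 2 :> R.
  by rewrite -H0; apply: H_le2.
have L2 : \sum_(A in G2) ('C(n, #|A|)%:R)^-1 <= 2 :> R.
  have e : \sum_(A in G2) ('C(n, #|A|)%:R)^-1 = \sum_(X in (@setC _) @: G2) ('C(n, #|X|)%:R)^-1 :> R.
    rewrite big_imset /=; last by move=> x y _ _; apply: setC_inj.
    by apply: eq_bigr => A _; rewrite cardC' bin_sub // card_le_n.
  by rewrite e -H0; apply: H_le2.
rewrite /bernoulli_prob.
apply: (@le_trans _ _ (\sum_(S in F) M * ('C(n, #|S|)%:R)^-1)).
  by apply: ler_sum => S _; exact: hterm.
rewrite -mulr_sumr (big_setID T1) /= -/G1 -/G2.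
have : M * (\sum_(i in G1) ('C(n, #|i|)%:R)^-1 + \sum_(i in G2) ('C(n, #|i|)%:R)^-1) <= M * 4.
  by apply: ler_wpM2l => //; lra.
rewrite mulrC; move=> h; apply: (le_trans h).
by rewrite /M mulrC mulrA.
Qed.
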